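(* Let $k_1,k_2$ be positive integers with $k_1\ge k_2\ge 2$, and let $D$ be a digraph that has a Hamiltonian directed path and contains no subdivision of $C(k_1,k_2)$ as a subdigraph. Then $\chi(D)\le 3k_1$.
   Context: Digraphs are orientations of finite simple graphs (no loops, no multiple arcs, no pair of opposite arcs). The chromatic number $\chi(D)$ of a digraph is the chromatic number of its underlying undirected graph. For positive integers $k_1,k_2$, the two-blocks cycle $C(k_1,k_2)$ is the oriented cycle formed by two internally disjoint directed paths from a vertex $x$ to a vertex $y$, of lengths $k_1$ and $k_2$. A subdivision of a digraph $H$ is a digraph obtained from $H$ by replacing each arc $(u,v)$ by a directed $uv$-path of length at least $1$ (internally disjoint new paths). A Hamiltonian directed path is a directed path passing through all vertices. *)

(* Defs.v *)
From mathcomp Require Import all_boot.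
Set Implicit Arguments. Unset Strict Implicit. Unset Printing Implicit Defensive.

Definition digraph (T : finType) (A : rel T) : Prop :=
  (forall u, ~~ A u u) /\ (forall u v, A u v -> ~~ A v u).

Definition colorableb (T : finType) (A : rel T) (k : nat) : bool :=
  [exists f : {ffun T -> 'I_k}, [forall u, forall v, A u v ==> (f u != f v)]].

Lemma colorable_card (T : finType) (A : rel T) (irrA : forall u, ~~ A u u) :
  exists k, colorableb A k.
Proof.
exists #|T|; apply/existsP; exists [ffun x => enum_rank x].
apply/forallP => u; apply/forallP => v; apply/implyP => Auv.
rewrite !ffunE; apply/negP => /eqP /enum_rank_inj Euv.
by subst v; move: (irrA u); rewrite Auv.
Qed.

Definition chromatic_number (T : finType) (A : rel T)
  (irrA : forall u, ~~ A u u) : nat := ex_minn (colorable_card irrA).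

(* The sequence x :: p is a directed path (distinct vertices, consecutive arcs);
   its length (number of arcs) is size p and it goes from x to last x p. *)
Definition dipath (T : finType) (A : rel T) (x : T) (p : seq T) : bool :=
  path A x p && uniq (x :: p).

Definition has_hamiltonian_dipath (T : finType) (A : rel T) : Prop :=
  exists x p, dipath A x p /\ forall v, v \in x :: p.

(* D contains a subdivision of the two-blocks cycle C(k1,k2) as a subdigraph:
   a subdivision of C(k1,k2) is exactly the union of two internally disjoint
   directed x-y paths of lengths at least k1 and k2 respectively. *)
Definition has_subdiv_two_blocks (T : finType) (A : rel T) (k1 k2 : nat) : Prop :=
  exists x y p1 p2,
    [/\ dipath A x p1 /\ dipath A x p2,
        last x p1 = y /\ last x p2 = y,
        k1 <= size p1, k2 <= size p2 &
        (forall v, v \in x :: p1 -> v \in x :: p2 -> v = x \/ v = y)].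

(* Main.v *)
Require Import Defs.
From mathcomp Require Import all_boot zify.
From Stdlib Require Import Classical.
Set Implicit Arguments. Unset Strict Implicit. Unset Printing Implicit Defensive.

Section Col.
Variables (n : nat) (cls : nat -> nat) (E : rel nat).
Hypothesis Esym : forall i j, E i j = E j i.
Hypothesis Eirr : forall i, ~~ E i i.
Hypothesis Ecls : forall i j, E i j -> cls i = cls j.

Definition noncross (P : pred nat) := forall i j k l, P i -> P j -> P k -> P l ->
  i < j -> j < k -> k < l -> E i k -> E j l -> cls i = cls j -> False.

Definition inner (P : pred nat) z t := exists u, P u /\ cls u = cls z /\
  ((z < u < t) \/ (t < u < z)).

Definition good (P : pred nat) z := forall t, P t -> E z t -> ~ inner P z t.

Lemma good_or_bad P z : good P z \/ exists t, P t /\ E z t /\ inner P z t.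
Proof.
case: (classic (exists t, P t /\ E z t /\ inner P z t)) => [H|H]; [by right|left].
by move=> t Pt Ezt Hi; apply: H; exists t.
Qed.

Definition Ch (P : pred nat) d := exists x y, P x /\ P y /\ E x y /\ y = x + d /\
  exists u, P u /\ cls u = cls x /\ x < u < y.

Lemma Ch_good P : noncross P -> forall d, Ch P d -> exists z, P z /\ good P z.
Proof.
move=> NC d; elim: d {-2}d (leqnn d) => [|d IH] d' Hd'.
  move=> [x [y [_ [_ [_ [-> [u [_ [_ Hu]]]]]]]]]; exfalso; lia.
move=> [x [y [Px [Py [Exy [Ey [u [Pu [Cu Hu]]]]]]]]].
case: (good_or_bad P u) => [G|[t [Pt [Eut [w [Pw [Cw Hw]]]]]]].
  by exists u.
have Ctu : cls t = cls u by rewrite (Ecls Eut).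
have Htx : x <= t.
  case: (leqP x t) => // Htx; exfalso.
  apply: (NC t x u y) => //; try lia; first by rewrite Esym.
have Hty : t <= y.
  case: (leqP t y) => // Hty; exfalso.
  by apply: (NC x u y t) => //; try lia.
have tu : t != u by apply/eqP => E0; move: (Eirr u); rewrite -{2}E0 Eut.
case: (ltnP u t) => Hut.
  apply: (IH (t - u)); first lia.
  exists u, t; do 3 (split => //); split; first lia.
  exists w; split => //; split; [by rewrite Cw | lia].
apply: (IH (u - t)); first lia.
exists t, u; do 2 (split => //); split; first by rewrite Esym.
split; first lia.
exists w; split => //; split; [by rewrite Cw Ctu | lia].
Qed.

Lemma good_exists P z0 : noncross P -> P z0 -> exists z, P z /\ good P z.
Proof.
move=> NC Pz0; case: (good_or_bad P z0) => [G|[t [Pt [Ezt [w [Pw [Cw Hw]]]]]]].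
  by exists z0.
have Ctz : cls t = cls z0 by rewrite (Ecls Ezt).
case: (ltnP z0 t) => H.
  apply: (Ch_good NC (d := t - z0)); exists z0, t; do 3 (split => //).
  split; first lia. exists w; split => //; split => //; lia.
apply: (Ch_good NC (d := z0 - t)); exists t, z0; do 2 (split => //).
split; first by rewrite Esym. split; first lia.
exists w; split => //; split; [by rewrite Cw Ctz | lia].
Qed.

Lemma good_nbrs P z : good P z -> P z -> exists u w, forall t, P t -> E z t -> t = u \/ t = w.
Proof.
move=> G Pz.
have uniqside : forall t1 t2, P t1 -> P t2 -> E z t1 -> E z t2 ->
    ((z < t1) = (z < t2)) -> t1 = t2.
  move=> t1 t2 P1 P2 E1 E2 Hs.
  have n1 : t1 != z by apply/eqP => E0; move: (Eirr z); rewrite -{2}E0 E1.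
  have n2 : t2 != z by apply/eqP => E0; move: (Eirr z); rewrite -{2}E0 E2.
  have Hs' : (z < t1) = (z < t2) by [].
  have side : (z < t1 /\ z < t2) \/ (t1 < z /\ t2 < z).
    move: Hs' n1 n2; case: (ltnP z t1) => A1; case: (ltnP z t2) => A2 //= _ N1 N2; lia.
  case: (ltngtP t1 t2) => // H; exfalso.
    case: side => [[A1 A2]|[A1 A2]].
      apply: (G t2 P2 E2); exists t1; split => //; split; first by rewrite (Ecls E1).
      lia.
    apply: (G t1 P1 E1); exists t2; split => //; split; first by rewrite (Ecls E2).
    lia.
  case: side => [[A1 A2]|[A1 A2]].
    apply: (G t1 P1 E1); exists t2; split => //; split; first by rewrite (Ecls E2).
    lia.
  apply: (G t2 P2 E2); exists t1; split => //; split; first by rewrite (Ecls E1).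
  lia.
case: (classic (exists t, P t /\ E z t /\ z < t)) => [[w [Pw [Ew Hw]]]|Nw];
case: (classic (exists t, P t /\ E z t /\ t < z)) => [[u [Pu [Eu Hu]]]|Nu].
- exists u, w => t Pt Et.
  case: (ltnP z t) => H.
    by right; apply: uniqside => //; rewrite H Hw.
  left; apply: uniqside => //.
  have : t != z by apply/eqP => E0; move: (Eirr z); rewrite -{2}E0 Et.
  move=> ?; lia.
- exists w, w => t Pt Et; left.
  case: (ltnP z t) => H; first by apply: uniqside => //; rewrite H Hw.
  exfalso; apply: Nu; exists t; split => //; split => //.
  have : t != z by apply/eqP => E0; move: (Eirr z); rewrite -{2}E0 Et.
  lia.
- exists u, u => t Pt Et; left.
  case: (ltnP z t) => H; first by exfalso; apply: Nw; exists t.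
  apply: uniqside => //.
  have : t != z by apply/eqP => E0; move: (Eirr z); rewrite -{2}E0 Et.
  move=> ?; lia.
- exists z, z => t Pt Et; exfalso.
  have : t != z by apply/eqP => E0; move: (Eirr z); rewrite -{2}E0 Et.
  case: (ltngtP z t) => H _ //.
  + by apply: Nw; exists t.
  + by apply: Nu; exists t.
Qed.

Lemma count_sub_lt (a b : pred nat) s : (forall i, a i -> b i) ->
  (exists2 z, z \in s & b z && ~~ a z) -> count a s < count b s.
Proof.
move=> Hab; elim: s => [|y s IH] [z] //; rewrite inE /= => /orP [/eqP <- | zs] /andP [bz az].
  rewrite (negbTE az) bz add0n add1n ltnS; exact: sub_count.
have := IH (ex_intro2 _ _ z zs (introT andP (conj bz az))).
have : a y <= b y by case: (a y) (Hab y) => // ->.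
lia.
Qed.

Lemma col3 m (P : pred nat) : (forall i, P i -> i < n) -> count P (iota 0 n) <= m ->
  noncross P -> exists f : nat -> nat, (forall i, f i < 3) /\
  (forall i j, P i -> P j -> E i j -> f i != f j).
Proof.
elim: m P => [|m IH] P Pn Hc NC.
  exists (fun _ => 0); split => // i j Pi; exfalso.
  have : 0 < count P (iota 0 n).
    rewrite -has_count; apply/hasP; exists i => //; rewrite mem_iota /=; exact: Pn.
  lia.
case: (classic (exists z0, P z0)) => [[z0 Pz0]|NP]; last first.
  by exists (fun _ => 0); split => // i j Pi; exfalso; apply: NP; exists i.
have [z [Pz G]] := good_exists NC Pz0.
have [u [w Huw]] := good_nbrs G Pz.
pose P' := [pred i | P i && (i != z)].
have [f' [f'3 f'ok]] : exists f : nat -> nat, (forall i, f i < 3) /\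
    (forall i j, P' i -> P' j -> E i j -> f i != f j).
  apply: IH.
  - by move=> i /andP [Pi _]; exact: Pn.
  - have : count P' (iota 0 n) < count P (iota 0 n).
      apply: count_sub_lt; first by move=> i /andP [].
      exists z; first by rewrite mem_iota /=; exact: Pn.
      by rewrite /= Pz eqxx.
    lia.
  - move=> i j k l /andP [Pi _] /andP [Pj _] /andP [Pk _] /andP [Pl _].
    exact: NC.
have [c [c3 [cu cw]]] : exists c, c < 3 /\ c != f' u /\ c != f' w.
  case: (boolP ((f' u != 0) && (f' w != 0))) => [/andP [H1 H2]|H1].
    by exists 0; rewrite !(eq_sym 0).
  case: (boolP ((f' u != 1) && (f' w != 1))) => [/andP [H3 H4]|H3].
    by exists 1; rewrite !(eq_sym 1).
  exists 2; split => //; lia.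
exists (fun i => if i == z then c else f' i); split.
  by move=> i; case: (i == z).
move=> i j Pi Pj Eij.
case: (eqVneq i z) => [Eiz|niz]; case: (eqVneq j z) => [Ejz|njz].
- by rewrite Eiz Ejz (negbTE (Eirr z)) in Eij.
- rewrite Eiz in Eij; by case: (Huw j Pj Eij) => ->.
- rewrite Ejz Esym in Eij; by case: (Huw i Pi Eij) => ->; rewrite eq_sym.
- by apply: f'ok => //=; rewrite ?Pi ?Pj ?niz ?njz.
Qed.
End Col.

Section Ham.
Variables (T : finType) (A : rel T) (x : T) (p : seq T).
Hypothesis hp : path A x p.
Hypothesis hu : uniq (x :: p).
Let s := x :: p.
Let S i := nth x s i.
Definition R i j := (j == i.+1) || A (S i) (S j).

Lemma Sinj : {in (fun i => i < size s) &, injective S}.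
Proof. move=> i j Hi Hj /eqP; rewrite /S nth_uniq //. by move/eqP. Qed.

Lemma mk_sub k1 k2 a q1 q2 :
  all (fun i => i < size s) (a :: q1) -> all (fun i => i < size s) (a :: q2) ->
  path R a q1 -> path R a q2 -> uniq (a :: q1) -> uniq (a :: q2) ->
  last a q1 = last a q2 -> k1 <= size q1 -> k2 <= size q2 ->
  (forall i, i \in a :: q1 -> i \in a :: q2 -> (i == a) || (i == last a q1)) ->
  has_subdiv_two_blocks A k1 k2.
Proof.
move=> all1 all2 p1 p2 u1 u2 l12 s1 s2 com.
have pA : forall q, all (fun i => i < size s) (a :: q) -> path R a q ->
    path A (S a) (map S q).
  move=> q aq pq; rewrite path_map; apply: (sub_in_path _ aq pq).
  move=> i j Hi Hj /orP [/eqP Ej|] //=.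
  subst j; move/pathP: hp => /(_ x i) H; apply: H.
  rewrite /= in Hj; lia.
have uA : forall q, all (fun i => i < size s) (a :: q) -> uniq (a :: q) ->
    uniq (S a :: map S q).
  move=> q aq uq; rewrite -(map_cons S) map_inj_in_uniq //.
  move=> i j Hi Hj; apply: Sinj.
  - by move/allP: aq => /(_ i Hi).
  - by move/allP: aq => /(_ j Hj).
exists (S a), (S (last a q1)), (map S q1), (map S q2); split.
- split; apply/andP; split; by [apply: pA | apply: uA].
- by rewrite !last_map l12.
- by rewrite size_map.
- by rewrite size_map.
- move=> v; rewrite -!(map_cons S) => /mapP [i Hi ->] /mapP [j Hj Eij].
  have Eq : i = j.
    apply: Sinj => //.
    - by move/allP: all1 => /(_ i Hi).
    - by move/allP: all2 => /(_ j Hj).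
  subst j; by case/orP: (com i Hi Hj) => /eqP ->; [left|right].
Qed.

Lemma path_iota i m : path R i (iota i.+1 m).
Proof. elim: m i => //= m IH i; by rewrite IH /R eqxx. Qed.

Lemma last_iota i m : last i (iota i.+1 m) = i + m.
Proof. elim: m i => [|m IH] i /=; first by rewrite addn0. by rewrite IH addSnnS. Qed.


Ltac simpl_mem := rewrite ?(inE, mem_cat, mem_iota) /=.
Ltac solve_all := apply/allP => t; simpl_mem; move=> Ht; lia.
Ltac solve_uniq := rewrite /= ?cat_uniq ?iota_uniq /= ?(inE, mem_cat, mem_iota) /=; lia.
Ltac solve_last := rewrite /= ?last_cat /= ?last_iota; lia.
Ltac solve_size := rewrite /= ?size_cat ?size_iota /=; lia.
Ltac solve_com := move=> t; rewrite /= ?last_cat /= ?last_iota; simpl_mem; move=> H1 H2; lia.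

Lemma Rarc i j : A (S i) (S j) -> R i j.
Proof. by move=> H; rewrite /R H orbT. Qed.

Lemma conf_FF k1 k2 i j k l : i < j -> j < k -> k < l -> l < (size p).+1 -> k2 <= k1 ->
  k1 <= j - i -> k1 <= l - k -> A (S i) (S k) -> A (S j) (S l) ->
  has_subdiv_two_blocks A k1 k2.
Proof.
move=> ij jk kl ln k21 g1 g3 a1 a2.
apply: (@mk_sub k1 k2 i (k :: iota k.+1 (l - k)) (iota i.+1 (j - i) ++ [:: l])).
- solve_all.
- solve_all.
- by rewrite /= path_iota andbT Rarc.
- rewrite cat_path path_iota last_iota /= andbT.
  have -> : i + (j - i) = j by lia.
  exact: Rarc.
- solve_uniq.
- solve_uniq.
- solve_last.
- solve_size.
- solve_size.
- solve_com.
Qed.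

Lemma conf_BB k1 k2 i j k l : i < j -> j < k -> k < l -> l < (size p).+1 -> k2 <= k1 ->
  k1 <= j - i -> k1 <= l - k -> A (S k) (S i) -> A (S l) (S j) ->
  has_subdiv_two_blocks A k1 k2.
Proof.
move=> ij jk kl ln k21 g1 g3 a1 a2.
apply: (@mk_sub k1 k2 k (i :: iota i.+1 (j - i)) (iota k.+1 (l - k) ++ [:: j])).
- solve_all.
- solve_all.
- by rewrite /= path_iota andbT Rarc.
- rewrite cat_path path_iota last_iota /= andbT.
  have -> : k + (l - k) = l by lia.
  exact: Rarc.
- solve_uniq.
- solve_uniq.
- solve_last.
- solve_size.
- solve_size.
- solve_com.
Qed.

Lemma conf_FB k1 k2 i j k l : i < j -> j < k -> k < l -> l < (size p).+1 -> k2 <= k1 ->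
  k1 <= j - i -> k1 <= l - k -> A (S i) (S k) -> A (S l) (S j) ->
  has_subdiv_two_blocks A k1 k2.
Proof.
move=> ij jk kl ln k21 g1 g3 a1 a2.
apply: (@mk_sub k1 k2 i (k :: iota k.+1 (l - k) ++ [:: j]) (iota i.+1 (j - i))).
- solve_all.
- solve_all.
- rewrite /= cat_path path_iota last_iota /= andbT Rarc //=.
  have -> : k + (l - k) = l by lia.
  exact: Rarc.
- exact: path_iota.
- solve_uniq.
- solve_uniq.
- solve_last.
- solve_size.
- solve_size.
- solve_com.
Qed.

Lemma conf_BF k1 k2 i j k l : i < j -> j < k -> k < l -> l < (size p).+1 -> k2 <= k1 ->
  k1 <= j - i -> k1 <= l - k -> A (S k) (S i) -> A (S j) (S l) ->
  has_subdiv_two_blocks A k1 k2.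
Proof.
move=> ij jk kl ln k21 g1 g3 a1 a2.
apply: (@mk_sub k1 k2 k (i :: iota i.+1 (j - i) ++ [:: l]) (iota k.+1 (l - k))).
- solve_all.
- solve_all.
- rewrite /= cat_path path_iota last_iota /= andbT Rarc //=.
  have -> : i + (j - i) = j by lia.
  exact: Rarc.
- exact: path_iota.
- solve_uniq.
- solve_uniq.
- solve_last.
- solve_size.
- solve_size.
- solve_com.
Qed.

End Ham.

Lemma gap k1 a b : a < b -> a %% k1 = b %% k1 -> k1 <= b - a.
Proof.
move=> ab Hm; apply: dvdn_leq; first lia.
rewrite -eqn_mod_dvd; [by rewrite Hm | lia].
Qed.

Lemma split_eq k1 a1 a2 b1 b2 : a1 < k1 -> a2 < k1 -> a1 + k1 * b1 = a2 + k1 * b2 ->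
  a1 = a2 /\ b1 = b2.
Proof.
move=> h1 h2 E.
have hm : forall a b, a < k1 -> (a + k1 * b) %% k1 = a /\ (a + k1 * b) %/ k1 = b.
  move=> a b ha; rewrite addnC mulnC modnMDl modn_small //; split => //.
  rewrite divnMDl ?divn_small ?addn0 //; lia.
have [m1 d1] := hm _ b1 h1; have [m2 d2] := hm _ b2 h2.
split; [by rewrite -m1 -m2 E | by rewrite -d1 -d2 E].
Qed.

Theorem theorem7 (T : finType) (A : rel T) (k1 k2 : nat)
  (hD : digraph A) (hk : 2 <= k2 <= k1)
  (hham : has_hamiltonian_dipath A)
  (hnosub : ~ has_subdiv_two_blocks A k1 k2) :
  chromatic_number (proj1 hD) <= 3 * k1.
Proof.
case: hham => x [p [/andP [hp hu] hall]].
have k0 : 0 < k1 by lia.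
pose s := x :: p.
pose S i := nth x s i.
pose n := size s.
pose E := fun i j => (i %% k1 == j %% k1) && (A (S i) (S j) || A (S j) (S i)).
pose P := fun i => i < n.
have Airr := proj1 hD.
have Esym : forall i j, E i j = E j i.
  by move=> i j; rewrite /E /= eq_sym orbC.
have Eirr : forall i, ~~ E i i.
  by move=> i; rewrite /E /= (negbTE (Airr _)) andbF.
have Ecls : forall i j, E i j -> (fun i => i %% k1) i = (fun i => i %% k1) j.
  by move=> i j; rewrite /E /= => /andP [/eqP ? _].
have NC : noncross (fun i => i %% k1) E P.
  move=> i j k l Pi Pj Pk Pl ij jk kl; rewrite /E /= => /andP [/eqP cik aik] /andP [/eqP cjl ajl] cij.
  have g1 := gap ij cij.
  have g2 := gap jk (etrans (esym cij) cik).
  have g3 := gap kl (etrans (esym cik) (etrans cij cjl)).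
  have ln : l < (size p).+1 by [].
  have k21 : k2 <= k1 by lia.
  apply: hnosub.
  case/orP: aik => a1; case/orP: ajl => a2.
  - exact: (conf_FF hp hu ij jk kl ln k21 g1 g3 a1 a2).
  - exact: (conf_FB hp hu ij jk kl ln k21 g1 g3 a1 a2).
  - exact: (conf_BF hp hu ij jk kl ln k21 g1 g3 a1 a2).
  - exact: (conf_BB hp hu ij jk kl ln k21 g1 g3 a1 a2).
have [f [f3 fok]] := col3 Esym Eirr Ecls (m := count P (iota 0 n)) (fun i Pi => Pi) (leqnn _) NC.
have bnd : forall v, index v s %% k1 + k1 * f (index v s) < 3 * k1.
  move=> v; have := ltn_pmod (index v s) k0; have := f3 (index v s); nia.
pose g := [ffun v => Ordinal (bnd v)].
rewrite /chromatic_number; case: ex_minnP => m _ Hm; apply: Hm.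
apply/existsP; exists g; apply/forallP => u; apply/forallP => v; apply/implyP => Auv.
rewrite !ffunE; apply/negP => /eqP [] /split_eq [].
  exact: ltn_pmod. exact: ltn_pmod.
move=> Hc Hf.
have Hu : u \in s by exact: hall.
have Hv : v \in s by exact: hall.
have : E (index u s) (index v s).
  by rewrite /E /= Hc eqxx /S !nth_index // Auv.
move=> HE.
have Hi : index u s < n by rewrite /n index_mem.
have Hj : index v s < n by rewrite /n index_mem.
by have := fok _ _ Hi Hj HE; rewrite /= Hf eqxx.
Qed.
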